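(* Let $p_0,p_1,p_2$ be positive integers with $\gcd(p_0,p_1,p_2)=1$, and put $n=p_0+p_1+p_2$. Let $E=(\mathbb{Z}/n\mathbb{Z})\times\{0,1,2\}$ and define permutations $\sigma_0,\sigma_1$ of $E$ by $$\sigma_0(m,0)=(m,1),\quad \sigma_0(m,1)=(m,2),\quad \sigma_0(m,2)=(m,0),$$ $$\sigma_1(m,0)=(m-p_1,2),\quad \sigma_1(m,1)=(m-p_2,0),\quad \sigma_1(m,2)=(m-p_0,1),$$ with arithmetic in the first coordinate modulo $n$. Let $\alpha=\gcd(n,\,p_0p_1-p_2^2)$. Then the subgroup $\langle\sigma_0\sigma_1,\sigma_1\sigma_0\rangle$ of the symmetric group on $E$ has order $n^2/\alpha$.
   Context: These $\sigma_0,\sigma_1$ are the monodromy permutations of the dessin drawn on the rational billiards surface of the triangle with angles $(p_0\pi/n,p_1\pi/n,p_2\pi/n)$, acting on its $3n$ edges labeled $(m,i)$. Products are composition of functions: $(\sigma_0\sigma_1)(e)=\sigma_0(\sigma_1(e))$. *)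

(* Defs.v *)
From mathcomp Require Import all_boot all_order all_algebra all_fingroup.
Set Implicit Arguments. Unset Strict Implicit. Unset Printing Implicit Defensive.
Import GRing.Theory.
Local Open Scope ring_scope.

(* Edges (m,i) of E = Z/nZ x {0,1,2}; 'Z_n is Z/nZ for n >= 2 (here n >= 3). *)
Definition edge (n : nat) := ('Z_n * 'I_3)%type.

Definition i0 : 'I_3 := @Ordinal 3 0 isT.
Definition i1 : 'I_3 := @Ordinal 3 1 isT.
Definition i2 : 'I_3 := @Ordinal 3 2 isT.

Definition sig0_fun (n : nat) (x : edge n) : edge n :=
  let: (m, i) := x in
  match val i with 0%N => (m, i1) | 1%N => (m, i2) | _ => (m, i0) end.
Definition sig0_inv (n : nat) (x : edge n) : edge n :=
  let: (m, i) := x in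
  match val i with 0%N => (m, i2) | 1%N => (m, i0) | _ => (m, i1) end.

Definition sig1_fun (n p0 p1 p2 : nat) (x : edge n) : edge n :=
  let: (m, i) := x in
  match val i with
  | 0%N => (m - p1%:R, i2) | 1%N => (m - p2%:R, i0) | _ => (m - p0%:R, i1) end.
Definition sig1_inv (n p0 p1 p2 : nat) (x : edge n) : edge n :=
  let: (m, i) := x in
  match val i with
  | 0%N => (m + p2%:R, i1) | 1%N => (m + p0%:R, i2) | _ => (m + p1%:R, i0) end.

Lemma sig0_can n : cancel (@sig0_fun n) (@sig0_inv n).
Proof. by case=> m [[|[|[|i]]] Hi] //=; congr pair; apply: val_inj. Qed.

Lemma sig1_can n p0 p1 p2 : cancel (sig1_fun p0 p1 p2) (@sig1_inv n p0 p1 p2).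
Proof.
by case=> m [[|[|[|i]]] Hi] //=; rewrite subrK; congr pair; apply: val_inj.
Qed.

Definition sig0 (n : nat) : {perm edge n} := perm (can_inj (@sig0_can n)).
Definition sig1 (n p0 p1 p2 : nat) : {perm edge n} :=
  perm (can_inj (@sig1_can n p0 p1 p2)).

(* Composition of functions: (s0 s1)(e) = s0 (s1 e).  In mathcomp,
   (s * t) x = t (s x), so the paper's s0 s1 is (s1 * s0)%g. *)
Definition comp_perm (T : finType) (s t : {perm T}) : {perm T} := (t * s)%g.

(* Main.v *)
Require Import Defs.
From mathcomp Require Import all_boot all_order all_algebra all_fingroup.
From mathcomp Require Import ring.
Import GRing.Theory.

Definition Dz (p0 p1 p2 : nat) : int := (Posz (p0 * p1)%N - Posz (p2 ^ 2)%N)%R.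
Definition alph (n p0 p1 p2 : nat) := gcdn n `|(p0 * p1)%N - (p2 ^ 2)%N|%N.
Lemma alphE n p0 p1 p2 : alph n p0 p1 p2 = gcdn n `|Dz p0 p1 p2|. Proof. by []. Qed.

Lemma key (n p0 p1 p2 : nat) : n = (p0+p1+p2)%N -> (1 < n)%N ->
  gcdn (gcdn p0 p1) p2 = 1%N -> forall k l : 'Z_n, (k * p1%:R + l * p2%:R = 0)%R ->
  alph n p0 p1 p2 %| nat_of_ord (k * p2%:R + l * p0%:R)%R.
Proof.
move=> Hn Hn1 Hg k l.
rewrite -(natr_Zp k) -(natr_Zp l) -!natrM -!natrD => Hz.
have {}Hz : (n %| k * p1 + l * p2)%N.
  by move/(congr1 (@nat_of_ord _)): Hz; rewrite val_Zp_nat //= => /eqP.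
rewrite val_Zp_nat // alphE.
set g := gcdn _ _.
set z := (k * p1 + l * p2)%N in Hz.
set Y := (k * p2 + l * p0)%N.
have gn : (g %| n)%N by apply: dvdn_gcdl.
rewrite /dvdn modn_dvdm // -/(dvdn g Y).
have gz : (Posz g %| Posz z)%Z by rewrite dvdzE /=; apply: dvdn_trans Hz.
have gD : (Posz g %| Dz p0 p1 p2)%Z by rewrite dvdzE /=; apply: dvdn_gcdr.
have h2 : (g %| p2 * Y)%N.
  have -> : (p2 * Y)%N = `|(Posz p0 * Posz z - Posz k * Dz p0 p1 p2)%R|%N.
    suff -> : (Posz p0 * Posz z - Posz k * Dz p0 p1 p2)%R = Posz (p2 * Y) by [].
    rewrite /z /Y /Dz !PoszM !PoszD !PoszM /=; ring.
  suff : (Posz g %| (Posz p0 * Posz z - Posz k * Dz p0 p1 p2)%R)%Z by rewrite dvdzE.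
  by apply: rpredB; apply: dvdz_mull.
have h1 : (g %| p1 * Y)%N.
  have -> : (p1 * Y)%N = `|(Posz l * Dz p0 p1 p2 + Posz p2 * Posz z)%R|%N.
    suff -> : (Posz l * Dz p0 p1 p2 + Posz p2 * Posz z)%R = Posz (p1 * Y) by [].
    rewrite /z /Y /Dz !PoszM !PoszD !PoszM /=; ring.
  suff : (Posz g %| (Posz l * Dz p0 p1 p2 + Posz p2 * Posz z)%R)%Z by rewrite dvdzE.
  by apply: rpredD; apply: dvdz_mull.
have h0 : (g %| p0 * Y)%N.
  have e : (n * Y = p0 * Y + (p1 * Y + p2 * Y))%N by rewrite Hn; ring.
  have : (g %| n * Y)%N by apply: dvdn_mulr.
  by rewrite e (dvdn_addl _ (dvdn_add h1 h2)).
have : (g %| gcdn (gcdn (p0 * Y) (p1 * Y)) (p2 * Y))%N by rewrite !dvdn_gcd h0 h1 h2.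
by rewrite -!muln_gcdl Hg mul1n.
Qed.

Lemma Zn0 {n m} : (1 < n)%N -> (n %| m)%N -> (m%:R : 'Z_n)%R = 0%R.
Proof. by move=> n1 /eqP H; rewrite -Zp_nat_mod // H. Qed.

Lemma unit_comb (n p0 p1 p2 : nat) : n = (p0+p1+p2)%N -> (1 < n)%N -> (0 < p1)%N ->
  gcdn (gcdn p0 p1) p2 = 1%N ->
  exists k1 l1 : 'Z_n, (k1 * p1%:R + l1 * p2%:R = 1)%R.
Proof.
move=> Hn n1 p1g Hg.
set h := gcdn p1 p2.
have [a _ Ha] := Bezoutl p2 p1g.
have hn : gcdn n h = 1%N.
  have hd : (h %| p1 + p2)%N by rewrite dvdn_add ?dvdn_gcdl ?dvdn_gcdr.
  rewrite gcdnC Hn -addnA addnC -(divnK hd) gcdnMDl /h.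
  by rewrite -Hg gcdnC gcdnA [gcdn p0 p1]gcdnC.
have [c _ Hc] := Bezoutl h (ltnW n1).
rewrite hn in Hc.
have := Zn0 n1 Hc; rewrite natrD natrM => {}Hc.
exists (- c%:R * ((h + a * p2) %/ p1)%:R)%R, (c%:R * a%:R)%R.
have e1 : (((h + a * p2) %/ p1)%:R * p1%:R = h%:R + a%:R * p2%:R :> 'Z_n)%R.
  by rewrite -natrM divnK // natrD natrM.
transitivity (- (c%:R * (((h + a * p2) %/ p1)%:R * p1%:R - a%:R * p2%:R)) : 'Z_n)%R.
  ring.
rewrite e1 addrK.
by apply/eqP; rewrite eqr_oppLR -subr_eq0 opprK addrC Hc.
Qed.

Definition Dr n p0 p1 p2 : 'Z_n := ((p0 * p1)%:R - (p2 ^ 2)%:R)%R.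

Lemma g_comb (n p0 p1 p2 : nat) : (1 < n)%N ->
  exists c : 'Z_n, ((alph n p0 p1 p2)%:R = c * Dr n p0 p1 p2)%R.
Proof.
move=> n1.
have [a _ Ha] := Bezoutl `|Dz p0 p1 p2| (ltnW n1).
have := Zn0 n1 Ha; rewrite -alphE natrD natrM => {}Ha.
have -> : ((alph n p0 p1 p2)%:R = - (a%:R * `|Dz p0 p1 p2|%:R) :> 'Z_n)%R.
  by apply/eqP; rewrite -subr_eq0 opprK Ha.
rewrite /Dz /Dr; case: (leqP (p0 * p1) (p2 ^ 2)) => H.
  rewrite distnEr // natrB //; exists (a%:R)%R; ring.
rewrite distnEl ?natrB ?(ltnW H) //; exists (- a%:R)%R; ring.
Qed.

Definition T2 n p0 p1 p2 : {set 'Z_n * 'Z_n} :=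
  [set ((k * p1%:R + l * p2%:R)%R, (k * p2%:R + l * p0%:R)%R) | k : 'Z_n, l : 'Z_n].

Lemma cardT2 (n p0 p1 p2 : nat) : n = (p0+p1+p2)%N -> (1 < n)%N -> (0 < p1)%N ->
  gcdn (gcdn p0 p1) p2 = 1%N ->
  #|T2 n p0 p1 p2| = (n * (n %/ alph n p0 p1 p2))%N.
Proof.
move=> Hn n1 p1g Hg.
have [k1 [l1 Hkl]] := @unit_comb n p0 p1 p2 Hn n1 p1g Hg.
have [c Hc] := @g_comb n p0 p1 p2 n1.
set g := alph n p0 p1 p2 in Hc *.
have gn : (g %| n)%N by apply: dvdn_gcdl.
have g0 : (0 < g)%N by rewrite gcdn_gt0 (ltnW n1).
set e := (k1 * p2%:R + l1 * p0%:R)%R.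
pose Phi (xj : 'Z_n * 'I_(n %/ g)) := (xj.1, (xj.1 * e + (g * xj.2)%:R)%R).
have -> : T2 n p0 p1 p2 = Phi @: setT.
  apply/setP => t; apply/idP/idP.
  - case/imset2P => k l _ _ ->.
    set x := (k * p1%:R + l * p2%:R)%R.
    set k' := (k - x * k1)%R; set l' := (l - x * l1)%R.
    have H0 : (k' * p1%:R + l' * p2%:R = 0)%R.
      transitivity (k * p1%:R + l * p2%:R - x * (k1 * p1%:R + l1 * p2%:R))%R.
        rewrite /k' /l'; ring.
      by rewrite Hkl mulr1 subrr.
    have := @key n p0 p1 p2 Hn n1 Hg _ _ H0.
    rewrite -/g; set r := (k' * p2%:R + l' * p0%:R)%R => gr.
    have jlt : ((r : nat) %/ g < n %/ g)%N.
      by rewrite ltn_divRL // divnK // -{2}(Zp_cast n1); apply: ltn_ord.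
    apply/imsetP; exists (x, Ordinal jlt) => //.
    rewrite /Phi /=; congr pair.
    rewrite mulnC divnK // (natr_Zp r).
    rewrite /r /k' /l' /e; ring.
  - case/imsetP => [[x j]] _ ->.
    apply/imset2P.
    exists (x * k1 - j%:R * c * p2%:R)%R (x * l1 + j%:R * c * p1%:R)%R => //.
    rewrite /Phi /=; congr pair.
      transitivity (x * (k1 * p1%:R + l1 * p2%:R))%R; first by rewrite Hkl mulr1.
      ring.
    rewrite natrM Hc /Dr /e; ring.
rewrite card_imset; last first.
  move=> [x j] [x' j'] E.
  have Ex : x = x' := congr1 fst E.
  have Hj : (x * e + (g * j)%:R = x' * e + (g * j')%:R)%R := congr1 snd E.
  rewrite -Ex in Hj *; move: (congr1 (@nat_of_ord _) (addrI _ Hj)).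
  have lt (i : 'I_(n %/ g)) : (g * i < n)%N.
    by rewrite mulnC -ltn_divRL.
  rewrite !val_Zp_nat // !modn_small // => /eqP.
  by rewrite eqn_pmul2l // => /eqP Hjj; congr pair; apply: val_inj.
rewrite cardsT card_prod !card_ord Zp_cast //.
Qed.

Definition ta {n} p0 p1 p2 (i : 'I_3) : 'Z_n :=
  (match val i with 0 => p1 | 1 => p2 | _ => p0 end)%:R%R.
Definition tb {n} p0 p1 p2 (i : 'I_3) : 'Z_n :=
  (match val i with 0 => p2 | 1 => p0 | _ => p1 end)%:R%R.

Definition Pf {n} p0 p1 p2 (k l : 'Z_n) (x : edge n) : edge n :=
  ((x.1 - (k * ta p0 p1 p2 x.2 + l * tb p0 p1 p2 x.2))%R, x.2).

Lemma Pf_can n p0 p1 p2 k l : cancel (@Pf n p0 p1 p2 k l) (Pf p0 p1 p2 (- k)%R (- l)%R).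
Proof. by case=> m i; rewrite /Pf /=; congr pair; ring. Qed.

Definition P {n} p0 p1 p2 k l : {perm edge n} := perm (can_inj (@Pf_can n p0 p1 p2 k l)).

Lemma PE n p0 p1 p2 k l x : @P n p0 p1 p2 k l x = Pf p0 p1 p2 k l x.
Proof. by rewrite permE. Qed.

Lemma P_mul n p0 p1 p2 k l k' l' :
  (@P n p0 p1 p2 k l * P p0 p1 p2 k' l')%g = P p0 p1 p2 (k + k')%R (l + l')%R.
Proof. by apply/permP => -[m i]; rewrite permM !PE /Pf /=; congr pair; ring. Qed.

Lemma P_0 n p0 p1 p2 : @P n p0 p1 p2 0%R 0%R = 1%g.
Proof. by apply/permP => -[m i]; rewrite perm1 PE /Pf /=; congr pair; ring. Qed.

Lemma a_P n p0 p1 p2 : comp_perm (sig0 n) (sig1 n p0 p1 p2) = P p0 p1 p2 1%R 0%R.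
Proof.
apply/permP => -[m [[|[|[|i]]] Hi]] //; rewrite /comp_perm permM !permE /= /Pf /ta /tb /=;
  (congr pair; [ring | by apply: val_inj]).
Qed.

Lemma b_P n p0 p1 p2 : comp_perm (sig1 n p0 p1 p2) (sig0 n) = P p0 p1 p2 0%R 1%R.
Proof.
apply/permP => -[m [[|[|[|i]]] Hi]] //; rewrite /comp_perm permM !permE /= /Pf /ta /tb /=;
  (congr pair; [ring | by apply: val_inj]).
Qed.

Lemma P_exp n p0 p1 p2 k l j :
  ((@P n p0 p1 p2 k l) ^+ j)%g = P p0 p1 p2 (k *+ j)%R (l *+ j)%R.
Proof.
elim: j => [|j IH]; first by rewrite expg0 !mulr0n P_0.
by rewrite expgSr IH P_mul !mulrS [(k + _)%R]addrC [(l + _)%R]addrC.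
Qed.

Lemma H_eq n p0 p1 p2 :
  <<[set comp_perm (sig0 n) (sig1 n p0 p1 p2); comp_perm (sig1 n p0 p1 p2) (sig0 n)]>>%g
  = [set P p0 p1 p2 k l | k : 'Z_n, l : 'Z_n].
Proof.
set G := [set _ | k : 'Z_n, l : 'Z_n].
have Gg : group_set G.
  apply/group_setP; split.
    by apply/imset2P; exists 0%R 0%R => //; rewrite P_0.
  move=> x y /imset2P[k l _ _ ->] /imset2P[k' l' _ _ ->].
  by apply/imset2P; exists (k + k')%R (l + l')%R => //; rewrite P_mul.
apply/eqP; rewrite eqEsubset; apply/andP; split.
  rewrite (gen_subG _ (Group Gg)) /= a_P b_P.
  by rewrite subUset !sub1set; apply/andP; split; apply/imset2P;
    [exists 1%R 0%R | exists 0%R 1%R].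
apply/subsetP => x /imset2P[k l _ _ ->].
have -> : P p0 p1 p2 k l =
  ((comp_perm (sig0 n) (sig1 n p0 p1 p2)) ^+ k * (comp_perm (sig1 n p0 p1 p2) (sig0 n)) ^+ l)%g.
  by rewrite a_P b_P !P_exp P_mul !mul0rn add0r addr0 !natr_Zp.
by rewrite groupM // groupX // mem_gen // !inE eqxx ?orbT.
Qed.

Definition tau {n} (pi : {perm edge n}) : 'Z_n * 'Z_n :=
  ((- (pi (0%R, i0)).1)%R, (- (pi (0%R, i1)).1)%R).

Lemma tauP n p0 p1 p2 k l : tau (@P n p0 p1 p2 k l) =
  ((k * p1%:R + l * p2%:R)%R, (k * p2%:R + l * p0%:R)%R).
Proof. by rewrite /tau !PE /Pf /ta /tb /=; congr pair; ring. Qed.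

Lemma card_G n p0 p1 p2 : n = (p0 + p1 + p2)%N -> (1 < n)%N ->
  #|[set P p0 p1 p2 k l | k : 'Z_n, l : 'Z_n]| =
  #|[set ((k * p1%:R + l * p2%:R)%R, (k * p2%:R + l * p0%:R)%R) | k : 'Z_n, l : 'Z_n]|.
Proof.
move=> Hn n1.
have inj : {in [set P p0 p1 p2 k l | k : 'Z_n, l : 'Z_n] &, injective tau}.
  move=> _ _ /imset2P[k l _ _ ->] /imset2P[k' l' _ _ ->].
  rewrite !tauP => E.
  have E1 : (k * p1%:R + l * p2%:R = k' * p1%:R + l' * p2%:R :> 'Z_n)%R := congr1 fst E.
  have E2 : (k * p2%:R + l * p0%:R = k' * p2%:R + l' * p0%:R :> 'Z_n)%R := congr1 snd E.
  have N0 : ((p0 + p1 + p2)%:R = 0 :> 'Z_n)%R by rewrite -Hn pchar_Zp.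
  rewrite !natrD in N0.
  have E3 : (k * p0%:R + l * p1%:R = k' * p0%:R + l' * p1%:R :> 'Z_n)%R.
    transitivity ((k + l) * (p0%:R + p1%:R + p2%:R) - (k * p1%:R + l * p2%:R)
       - (k * p2%:R + l * p0%:R) :> 'Z_n)%R; first ring.
    rewrite E1 E2 N0.
    transitivity ((k' + l') * (p0%:R + p1%:R + p2%:R) - (k' * p1%:R + l' * p2%:R)
       - (k' * p2%:R + l' * p0%:R) :> 'Z_n)%R; last ring.
    by rewrite N0 !mulr0.
  apply/permP => -[m [[|[|[|i]]] Hi]] //; rewrite !PE /Pf /ta /tb /=; congr pair.
  - by rewrite E1.
  - by rewrite E2.
  - by rewrite E3.
rewrite -(card_in_imset inj).
set T := [set (_, _) | k : 'Z_n, l : 'Z_n].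
suff -> : tau @: [set P p0 p1 p2 k l | k : 'Z_n, l : 'Z_n] = T by [].
apply/setP => t; apply/imsetP/imset2P.
  by case=> _ /imset2P[k l _ _ ->] ->; exists k l => //; rewrite tauP.
by case=> k l _ _ ->; exists (P p0 p1 p2 k l); [apply/imset2P; exists k l | rewrite tauP].
Qed.

Theorem lemma3 (p0 p1 p2 : nat) :
  (0 < p0)%N -> (0 < p1)%N -> (0 < p2)%N -> gcdn (gcdn p0 p1) p2 = 1%N ->
  let n := (p0 + p1 + p2)%N in
  let s0 := sig0 n in
  let s1 := sig1 n p0 p1 p2 in
  let alpha := gcdn n `|(p0 * p1)%N - (p2 ^ 2)%N|%N in
  #|<<[set comp_perm s0 s1; comp_perm s1 s0]>>%g| = (n ^ 2 %/ alpha)%N.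
Proof.
move=> p0g p1g p2g Hg n s0 s1 alpha.
have n1 : (1 < n)%N.
  by apply: (leq_trans _ (leq_addr p2 _)); apply: (leq_add p0g p1g).
rewrite /s0 /s1 H_eq (@card_G n p0 p1 p2 erefl n1) -/(T2 n p0 p1 p2).
rewrite (@cardT2 n p0 p1 p2 erefl n1 p1g Hg).
by rewrite -mulnn muln_divA // dvdn_gcdl.
Qed.
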